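(* Suppose Assumption (A3) of the context holds, and let $\{\sigma_k\},\{z_k\}$ be generated by Algorithm RiAL-RGD, with $\mathcal{L}_k(x)=f(x)+M_{h/\sigma_k}(\mathcal{A}(x)+z_k/\sigma_k)$ and $\Phi^*:=\inf_{x\in\mathcal{M}}\Phi(x)$. Then for every $x\in\mathcal{M}$ and $k\ge1$: $$\mathcal{L}_k(x)\ge\Phi^*-\frac{2L_h^2}{\sigma_1},\qquad \mathcal{L}_k(x)\le\Phi(x)+\frac{L_h^2}{\sigma_k},\qquad \mathcal{L}_{k+1}(x)\le\mathcal{L}_k(x)+\frac{2L_h^2}{\sigma_k}.$$
   Context: Setting. $\mathcal{E}_1,\mathcal{E}_2$ are finite-dimensional Euclidean spaces with inner product $\langle\cdot,\cdot\rangle$ and norm $\|\cdot\|$. $\mathcal{M}\subseteq\mathcal{E}_1$ is an embedded Riemannian submanifold with induced metric; $\mathrm{grad}\,g(x)=\mathrm{proj}_{\mathrm{T}_x\mathcal{M}}(\nabla g(x))$. A retraction $\mathrm{R}_x:\mathrm{T}_x\mathcal{M}\to\mathcal{M}$ (smooth, globally defined, $\mathrm{R}_x(0)=x$, $\frac{d}{dt}\mathrm{R}_x(tv)|_{t=0}=v$) is fixed. $f:\mathcal{E}_1\to\mathbb{R}$ is $C^1$, $\mathcal{A}:\mathcal{E}_1\to\mathcal{E}_2$ smooth with Jacobian $\nabla\mathcal{A}$, $h:\mathcal{E}_2\to\mathbb{R}$ convex; $\Phi(x)=f(x)+h(\mathcal{A}(x))$. For $\lambda>0$, $\mathrm{prox}_{\lambda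 h}(w)=\arg\min_u\{h(u)+\frac1{2\lambda}\|u-w\|^2\}$, $M_{\lambda h}(w)=\min_u\{h(u)+\frac1{2\lambda}\|u-w\|^2\}$. Algorithm RiAL-RGD: input $x_1\in\mathcal{M}$, $y_1=z_1=0$, $\varepsilon_1,\sigma_1>0$, $b>1$. For $k=1,2,\dots$: with $\mathcal{L}_k$ as in the claim, run $x_{k,1}=x_k$, $x_{k,t+1}=\mathrm{R}_{x_{k,t}}(-\zeta_{k,t}\mathrm{grad}\,\mathcal{L}_k(x_{k,t}))$ (stepsizes $\zeta_{k,t}>0$) until $\|\mathrm{grad}\,\mathcal{L}_k(x_{k,t_k})\|\le\varepsilon_k$; set $x_{k+1}=x_{k,t_k}$, $y_{k+1}=\mathrm{prox}_{h/\sigma_k}(\mathcal{A}(x_{k+1})+z_k/\sigma_k)$, $z_{k+1}=z_k+\sigma_k(\mathcal{A}(x_{k+1})-y_{k+1})$, $\sigma_{k+1}=b\sigma_k$, $\varepsilon_{k+1}=\varepsilon_k/b$. Assumption (A3): (i) $f(x')\le f(x)+\langle\nabla f(x),x'-x\rangle+\frac{L_f}{2}\|x'-x\|^2$ for all $x,x'\in\mathcal{M}$, and $|h(w)-h(w')|\le L_h\|w-w'\|$ for all $w,w'\in\mathcal{E}_2$; (ii) $\mathcal{A}$ is $L^0_{\mathcal{A}}$-Lipschitz and $\nabla\mathcal{A}$ is $L^1_{\mathcal{A}}$-Lipschitz on $\mathrm{conv}\,\mathcal{M}$; (iii) $\rho_{\mathcal{A}}:=\max_{x\in\mathrm{conv}\,\mathcal{M}}\|\nabla\mathcal{A}(x)\|<+\infty$.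 *)

(* Defs.v *)
From HB Require Import structures.
From mathcomp Require Import all_boot all_order all_algebra.
From mathcomp Require Import all_classical all_reals ereal.
Set Implicit Arguments. Unset Strict Implicit. Unset Printing Implicit Defensive.
Import Order.TTheory GRing.Theory Num.Theory.
Local Open Scope ring_scope.
Local Open Scope classical_set_scope.

Section Defs.
Variable R : realType.

Definition dotv (n : nat) (u v : 'rV[R]_n) : R := (u *m v^T) 0 0.
Definition enorm (n : nat) (u : 'rV[R]_n) : R := Num.sqrt (dotv u u).

Definition convex_fun (n : nat) (h : 'rV[R]_n -> R) : Prop :=
  forall (u v : 'rV[R]_n) (t : R), 0 <= t -> t <= 1 ->
    h (t *: u + (1 - t) *: v) <= t * h u + (1 - t) * h v.

Definition lipschitz_fun (n : nat) (h : 'rV[R]_n -> R) (L : R) : Prop :=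
  forall w w' : 'rV[R]_n, `|h w - h w'| <= L * enorm (w - w').

Definition moreau (n : nat) (h : 'rV[R]_n -> R) (lam : R) (w : 'rV[R]_n) : R :=
  inf [set h u + (2 * lam)^-1 * (enorm (u - w)) ^+ 2 | u in [set: 'rV[R]_n]].

Definition is_prox (n : nat) (h : 'rV[R]_n -> R) (lam : R) (w y : 'rV[R]_n) : Prop :=
  forall u : 'rV[R]_n,
    h y + (2 * lam)^-1 * (enorm (y - w)) ^+ 2 <= h u + (2 * lam)^-1 * (enorm (u - w)) ^+ 2.

Definition auglag (n1 n2 : nat) (f : 'rV[R]_n1 -> R) (A : 'rV[R]_n1 -> 'rV[R]_n2)
  (h : 'rV[R]_n2 -> R) (sigma : R) (z : 'rV[R]_n2) (x : 'rV[R]_n1) : R :=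
  f x + moreau h sigma^-1 (A x + sigma^-1 *: z).

Definition Phi (n1 n2 : nat) (f : 'rV[R]_n1 -> R) (A : 'rV[R]_n1 -> 'rV[R]_n2)
  (h : 'rV[R]_n2 -> R) (x : 'rV[R]_n1) : R := f x + h (A x).

Definition Phistar (n1 n2 : nat) (M : set 'rV[R]_n1) (f : 'rV[R]_n1 -> R)
  (A : 'rV[R]_n1 -> 'rV[R]_n2) (h : 'rV[R]_n2 -> R) : \bar R :=
  ereal_inf [set (Phi f A h u)%:E | u in M].

End Defs.

(* Main.v *)
Require Import Defs.
From HB Require Import structures.
From mathcomp Require Import all_boot all_order all_algebra.
From mathcomp Require Import all_classical all_reals ereal.
From mathcomp Require Import ring lra.
Import Order.TTheory GRing.Theory Num.Theory.
Local Open Scope ring_scope.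
Local Open Scope classical_set_scope.

Section Helpers.
Variable R : realType.
#[local] Set Implicit Arguments.


Lemma dotv_ge0 n (v : 'rV[R]_n) : 0 <= dotv v v.
Proof.
rewrite /dotv !mxE; apply: sumr_ge0 => i _; rewrite mxE -expr2; exact: sqr_ge0.
Qed.

Lemma dotvZ n (c : R) (v : 'rV[R]_n) : dotv (c *: v) (c *: v) = c ^+ 2 * dotv v v.
Proof.
rewrite /dotv !mxE mulr_sumr; apply: eq_bigr => i _; rewrite !mxE; ring.
Qed.

Lemma enorm_ge0 n (v : 'rV[R]_n) : 0 <= enorm v.
Proof. exact: sqrtr_ge0. Qed.

Lemma enorm_sqr n (v : 'rV[R]_n) : enorm v ^+ 2 = dotv v v.
Proof. by rewrite /enorm sqr_sqrtr // dotv_ge0. Qed.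

Lemma enormZ n (c : R) (v : 'rV[R]_n) : enorm (c *: v) = `|c| * enorm v.
Proof. by rewrite /enorm dotvZ sqrtrM ?sqr_ge0 // sqrtr_sqr. Qed.

Lemma enormN n (v : 'rV[R]_n) : enorm (- v) = enorm v.
Proof. by rewrite -scaleN1r enormZ normrN1 mul1r. Qed.

Lemma enormB n (u v : 'rV[R]_n) : enorm (u - v) = enorm (v - u).
Proof. by rewrite -enormN opprB. Qed.

Lemma enorm0 n : enorm (0 : 'rV[R]_n) = 0.
Proof. by rewrite -(scale0r (0 : 'rV[R]_n)) enormZ normr0 mul0r. Qed.

Lemma lip_le n (h : 'rV[R]_n -> R) L (u v : 'rV[R]_n) :
  lipschitz_fun h L -> h u <= h v + `|L| * enorm (u - v).
Proof.
move=> hL; have := hL u v.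
have : L * enorm (u - v) <= `|L| * enorm (u - v).
  by apply: ler_wpM2r; [exact: enorm_ge0 | exact: ler_norm].
have := ler_norm (h u - h v). lra.
Qed.

Lemma prox_bound n (h : 'rV[R]_n -> R) L (s : R) (w y : 'rV[R]_n) :
  0 < s -> lipschitz_fun h L -> is_prox h s^-1 w y -> s * enorm (y - w) <= `|L|.
Proof.
move=> s0 hL hp.
set d := enorm (y - w).
have d0 : 0 <= d by exact: enorm_ge0.
have L0 : 0 <= `|L| by [].
rewrite leNgt; apply/negP => hlt.
have dp : 0 < d.
  rewrite lt0r d0 andbT; apply/eqP => d00; move: hlt; rewrite d00 mulr0; lra.
set t := (s * d - `|L|) / (s * d).
have sd0 : 0 < s * d by exact: mulr_gt0.
have t0 : 0 < t by apply: divr_gt0; lra.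
have t1 : t <= 1 by rewrite ler_pdivrMr // mul1r; lra.
set u := y + t *: (w - y).
have e1 : u - w = (1 - t) *: (y - w).
  by apply/rowP => i; rewrite /u !mxE; ring.
have e2 : u - y = t *: (w - y) by apply/rowP => i; rewrite /u !mxE; ring.
have t1' : 0 <= 1 - t by lra.
have := hp u; rewrite e1 enormZ (ger0_norm t1').
rewrite invrM ?unitfE ?invrK ?gt_eqF ?pnatr_eq0 ?invr_gt0 //.
have := @lip_le _ _ _ u y hL; rewrite e2 enormZ -enormB -/d (gtr0_norm t0).
move=> hl hpu.
have key : s * (2 * t - t ^+ 2) * d ^+ 2 <= 2 * `|L| * t * d.
  have : (s / 2) * (d ^+ 2) <= (s / 2) * ((1 - t) ^+ 2 * d ^+ 2) + `|L| * (t * d).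
    move: hpu hl; rewrite exprMn; lra.
  nra.
have key2 : s * (2 - t) * d <= 2 * `|L|.
  have : (s * (2 - t) * d) * (t * d) <= (2 * `|L|) * (t * d) by nra.
  by rewrite ler_pM2r //; exact: mulr_gt0.
have : t * (s * d) = s * d - `|L| by rewrite /t divfK // gt_eqF.
nra.
Qed.
Lemma quad_lb (a r s : R) : 0 < s -> - (a ^+ 2 / (2 * s)) <= s / 2 * r ^+ 2 - a * r.
Proof.
move=> s0.
have e : s / 2 * r ^+ 2 - a * r + a ^+ 2 / (2 * s) = (s * r - a) ^+ 2 / (2 * s).
  by field; rewrite gt_eqF.
have : 0 <= (s * r - a) ^+ 2 / (2 * s) by apply: divr_ge0; [exact: sqr_ge0 | lra].
lra.
Qed.

Definition mset n (h : 'rV[R]_n -> R) (s : R) (w : 'rV[R]_n) :=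
  [set h u + (2 * s^-1)^-1 * (enorm (u - w)) ^+ 2 | u in [set: 'rV[R]_n]].

Lemma mset_lb n (h : 'rV[R]_n -> R) L s w : 0 < s -> lipschitz_fun h L ->
  lbound (mset h s w) (h w - `|L| ^+ 2 / (2 * s)).
Proof.
move=> s0 hL _ [u _ <-].
rewrite invrM ?unitfE ?invrK ?gt_eqF ?pnatr_eq0 ?invr_gt0 //.
have := @lip_le _ _ _ w u hL; rewrite enormB.
have := quad_lb `|L| (enorm (u - w)) s s0.
lra.
Qed.

Lemma moreau_lb n (h : 'rV[R]_n -> R) L s w : 0 < s -> lipschitz_fun h L ->
  h w - `|L| ^+ 2 / (2 * s) <= moreau h s^-1 w.
Proof.
move=> s0 hL; apply: lb_le_inf; last exact: mset_lb.
by exists (h w + (2 * s^-1)^-1 * (enorm (w - w)) ^+ 2); exists w.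
Qed.

Lemma moreau_ub n (h : 'rV[R]_n -> R) L s w v : 0 < s -> lipschitz_fun h L ->
  moreau h s^-1 w <= h v + s / 2 * (enorm (v - w)) ^+ 2.
Proof.
move=> s0 hL.
have -> : s / 2 = (2 * s^-1)^-1.
  by rewrite invrM ?unitfE ?invrK ?gt_eqF ?pnatr_eq0 ?invr_gt0 // mulrC.
apply: ge_inf; first by exists (h w - `|L| ^+ 2 / (2 * s)); exact: mset_lb.
by exists v.
Qed.
Lemma moreau_bounds n (h : 'rV[R]_n -> R) L s (v z : 'rV[R]_n) :
  0 < s -> lipschitz_fun h L -> enorm z <= `|L| ->
  h v - 3 / 2 * `|L| ^+ 2 * s^-1 <= moreau h s^-1 (v + s^-1 *: z)
  /\ moreau h s^-1 (v + s^-1 *: z) <= h v + `|L| ^+ 2 * s^-1 / 2.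
Proof.
move=> s0 hL ez.
have i0 : 0 < s^-1 by rewrite invr_gt0.
have e0 : 0 <= enorm z by exact: enorm_ge0.
have ev : v - (v + s^-1 *: z) = (- s^-1) *: z by rewrite opprD addrA subrr add0r scaleNr.
have nv : enorm (v - (v + s^-1 *: z)) = s^-1 * enorm z
  by rewrite ev enormZ normrN gtr0_norm.
split.
  have := @moreau_lb _ _ _ _ (v + s^-1 *: z) s0 hL.
  have := @lip_le _ _ _ v (v + s^-1 *: z) hL; rewrite nv.
  have -> : `|L| ^+ 2 / (2 * s) = `|L| ^+ 2 * s^-1 / 2.
    by rewrite invrM ?unitfE ?gt_eqF ?pnatr_eq0 // mulrA mulrC mulrA.
  have : `|L| * (s^-1 * enorm z) <= `|L| ^+ 2 * s^-1.
    have a0 : 0 <= `|L| by [].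
    have hz : 0 <= `|L| - enorm z by lra.
    have := mulr_ge0 (mulr_ge0 a0 (ltW i0)) hz.
    rewrite expr2; nra.
  lra.
have := @moreau_ub _ _ _ _ (v + s^-1 *: z) v s0 hL; rewrite nv.
have : s / 2 * (s^-1 * enorm z) ^+ 2 <= `|L| ^+ 2 * s^-1 / 2.
  have -> : s / 2 * (s^-1 * enorm z) ^+ 2 = s^-1 * enorm z ^+ 2 / 2
    by field; rewrite gt_eqF.
  have : enorm z ^+ 2 <= `|L| ^+ 2 by rewrite ler_sqr ?nnegrE.
  have := ltW i0. nra.
lra.
Qed.

Lemma fin1 (F H Mo a s1 sk : R) :
  H - 3 / 2 * a / sk <= Mo -> 0 <= a * (s1^-1 - sk^-1) -> 0 <= a * sk^-1 ->
  F + H - 2 * a / s1 <= F + Mo.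
Proof. rewrite mulrBr. lra. Qed.
Lemma fin2 (F H Mo a sk : R) :
  Mo <= H + a / sk / 2 -> 0 <= a * sk^-1 ->
  F + Mo <= F + H + a / sk.
Proof. lra. Qed.
Lemma fin3 (F H Mo Mo' a sk sk' : R) :
  Mo' <= H + a / sk' / 2 -> H - 3 / 2 * a / sk <= Mo ->
  0 <= a * (sk^-1 - sk'^-1) -> 0 <= a * sk'^-1 ->
  F + Mo' <= F + Mo + 2 * a / sk.
Proof. rewrite mulrBr. lra. Qed.
End Helpers.

Theorem lemma3 (R : realType) (n1 n2 : nat) (M : set 'rV[R]_n1)
  (f : 'rV[R]_n1 -> R) (A : 'rV[R]_n1 -> 'rV[R]_n2) (h : 'rV[R]_n2 -> R)
  (Lh b : R) (x : nat -> 'rV[R]_n1) (y z : nat -> 'rV[R]_n2)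
  (sigma eps : nat -> R) :
  convex_fun h ->
  lipschitz_fun h Lh ->
  0 < sigma 1%N -> 0 < eps 1%N -> 1 < b ->
  x 1%N \in M -> y 1%N = 0 -> z 1%N = 0 ->
  (forall k : nat, (1 <= k)%N -> x k.+1 \in M) ->
  (forall k : nat, (1 <= k)%N ->
     is_prox h (sigma k)^-1 (A (x k.+1) + (sigma k)^-1 *: z k) (y k.+1)) ->
  (forall k : nat, (1 <= k)%N -> z k.+1 = z k + sigma k *: (A (x k.+1) - y k.+1)) ->
  (forall k : nat, (1 <= k)%N -> sigma k.+1 = b * sigma k) ->
  (forall k : nat, (1 <= k)%N -> eps k.+1 = eps k / b) ->
  forall (u : 'rV[R]_n1), u \in M -> forall k : nat, (1 <= k)%N ->
    [/\ (Phistar M f A h - (2 * Lh ^+ 2 / sigma 1%N)%:E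
           <= (auglag f A h (sigma k) (z k) u)%:E)%E,
        auglag f A h (sigma k) (z k) u <= Phi f A h u + Lh ^+ 2 / sigma k
      & auglag f A h (sigma k.+1) (z k.+1) u
          <= auglag f A h (sigma k) (z k) u + 2 * Lh ^+ 2 / sigma k].
Proof.
move=> _ hL s1 _ b1 _ _ z1 _ hprox hz hs _ u uM k k1.
have hsig : forall m, 0 < sigma m.+1 /\ sigma 1%N <= sigma m.+1.
  elim=> [|m [IH1 IH2]]; first by split => //.
  rewrite hs //; split; first exact: mulr_gt0 (lt_trans ltr01 b1) IH1.
  apply: (le_trans IH2); rewrite ler_peMl //; [exact: ltW | exact: ltW].
have hsk : forall k, (1 <= k)%N -> 0 < sigma k /\ sigma 1%N <= sigma k.
  by case=> // m _; exact: hsig.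
have hmono : forall k, (1 <= k)%N -> sigma k <= sigma k.+1.
  move=> j j1; rewrite hs // ler_peMl //; [exact: ltW (proj1 (hsk j j1)) | exact: ltW].
have hzb : forall k, (1 <= k)%N -> enorm (z k) <= `|Lh|.
  case=> // -[|m] _; first by rewrite z1 enorm0.
  have [sp _] := hsk m.+1 isT.
  rewrite hz //.
  have -> : z m.+1 + sigma m.+1 *: (A (x m.+2) - y m.+2) =
     sigma m.+1 *: (A (x m.+2) + (sigma m.+1)^-1 *: z m.+1 - y m.+2).
    by apply/rowP => i; rewrite !mxE; field; rewrite gt_eqF.
  rewrite enormZ gtr0_norm // enormB.
  exact: (@prox_bound _ _ _ _ _ _ _ sp hL (hprox m.+1 isT)).
have [sk sk1] := hsk k k1.
have sk' : 0 < sigma k.+1 by exact: (proj1 (hsk k.+1 isT)).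
have [lbk ubk] := moreau_bounds (sigma k) (A u) (z k) sk hL (hzb k k1).
have [_ ubk'] := moreau_bounds (sigma k.+1) (A u) (z k.+1) sk' hL (hzb k.+1 isT).
have iL : Lh ^+ 2 = `|Lh| ^+ 2 by rewrite real_normK ?num_real.
have ik : (sigma k)^-1 <= (sigma 1%N)^-1 by rewrite lef_pV2 ?posrE.
have ik' : (sigma k.+1)^-1 <= (sigma k)^-1 by rewrite lef_pV2 ?posrE ?hmono.
have i0 : 0 < (sigma k)^-1 by rewrite invr_gt0.
have i0' : 0 < (sigma k.+1)^-1 by rewrite invr_gt0.
have a0 : 0 <= `|Lh| ^+ 2 by exact: sqr_ge0.
have p1 : 0 <= `|Lh| ^+ 2 * ((sigma 1%N)^-1 - (sigma k)^-1) by apply: mulr_ge0 => //; rewrite subr_ge0.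
have p2 : 0 <= `|Lh| ^+ 2 * ((sigma k)^-1 - (sigma k.+1)^-1) by apply: mulr_ge0 => //; rewrite subr_ge0.
have p3 := mulr_ge0 a0 (ltW i0').
have p4 := mulr_ge0 a0 (ltW i0).
rewrite /auglag /Phi; rewrite !iL; split.
- apply: (@le_trans _ _ ((Phi f A h u)%:E - (2 * `|Lh| ^+ 2 / sigma 1%N)%:E)%E).
    apply: leeB; last exact: lexx.
    rewrite /Phistar; apply: ereal_inf_lbound.
    by exists u => //; move: uM; rewrite inE.
  rewrite -EFinB lee_fin /Phi.
  exact: fin1 lbk p1 p4.
- exact: fin2 ubk p4.
- exact: fin3 ubk' lbk p2 p3.
Qed.
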